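(* Let $Z_1,\ldots,Z_{n+1}$ be i.i.d. from an arbitrary distribution $\mathcal P$, let $V$ be a fixed score function and $\alpha\in(0,1)$. Fix a grid $0\le a_1<\cdots<a_M\le 1$ and let $\tilde\alpha$ be the smallest grid value $a_m$ such that, with $\tilde\alpha=a_m$, either $\bar v^*:=Q(\tilde\alpha;\hat{\mathcal F})=\infty$ or condition (G2) holds (assume such a grid value always exists, e.g. $a_M=1$). Let $\widehat C(X_{n+1})=\{y\in\mathbb R: V(X_{n+1},y)\le Q(\tilde\alpha;\hat{\mathcal F})\}$. Then $\mathbb P\{Y_{n+1}\in\widehat C(X_{n+1})\}\ge\alpha$.
   Context: Data: $Z_i=(X_i,Y_i)\in\mathbb R^p\times\mathbb R$, $i=1,\ldots,n+1$; $X=\{X_1,\ldots,X_{n+1}\}$ (unordered). A localizer is a function $H(x_1,x_2,X)\in[0,1]$ of $x_1,x_2\in\mathbb R^p$ and of the unordered set $X$, satisfying $H(x,x,X)=1$ for all $x$. Write $H_{i,j}=H(X_i,X_j,X)$ and $p^H_{i,j}=H_{i,j}/\sum_{k=1}^{n+1}H_{i,k}$. For a probability distribution $\mathcal F$ on $\mathbb R\cup\{\infty\}$ and $a\in[0,1]$, $Q(a;\mathcal F)=\inf\{t:\mathbb P_{T\sim\mathcal F}(T\le t)\ge a\}$; $\delta_v$ denotes the point mass at $v$. A fixed score function is a deterministic measurable $V:\mathbb R^p\times\mathbb R\to[0,\infty)$ not depending on the data; $V_i=V(Z_i)$. Define $\hat{\mathcal F}=\sum_{j=1}^{n}p^H_{n+1,j}\delta_{V_j}+p^H_{n+1,n+1}\delta_{\infty}$.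 For a level $\tilde\alpha$, let $v^*_{i1}=Q(\tilde\alpha;\sum_{j=1}^n p^H_{i,j}\delta_{V_j}+p^H_{i,n+1}\delta_{\bar v^*})$ and $v^*_{i2}=Q(\tilde\alpha;\sum_{j=1}^n p^H_{i,j}\delta_{V_j}+p^H_{i,n+1}\delta_{0})$ for $i=1,\ldots,n$. Condition (G2): $\frac{1}{n+1}\sum_{i=1}^n\mathbb 1\{V_i\le v^*_{i1}\}\ge\alpha$ and $\frac{1}{n+1}\sum_{i=1}^n\mathbb 1\{V_i\le v^*_{i2}\}+\frac{1}{n+1}\ge\alpha$. *)

(* Defs.v *)
From HB Require Import structures.
From mathcomp Require Import all_boot all_order all_algebra all_fingroup.
From mathcomp Require Import all_classical all_reals all_analysis.
Set Implicit Arguments. Unset Strict Implicit. Unset Printing Implicit Defensive.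
Import Order.TTheory GRing.Theory Num.Theory.
Local Open Scope ring_scope.
Local Open Scope classical_set_scope.

(* Features live in R^p, represented as p.-tuple R (product sigma-algebra =
   Borel sigma-algebra of R^p).
   The n+1 data points are indexed by 'I_n.+1; the index ord_max (value n)
   is the test point Z_{n+1}, indices j with (j < n)%N are Z_1..Z_n. *)

Section Localized.
Variables (R : realType) (p n : nat).

Notation Rp := (p.-tuple R).

(* Q(a; F) for the discrete distribution F = sum_j w j * delta_(v j), values
   in the extended reals: inf { t | P_{T~F}(T <= t) >= a }. *)
Definition Qd (a : R) (w : 'I_n.+1 -> R) (v : 'I_n.+1 -> \bar R) : \bar R :=
  ereal_inf [set t : \bar R | a <= \sum_(j < n.+1 | (v j <= t)%E) w j].

(* H : localizer, H x1 x2 X with X the (multi)set of all n+1 features,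
   passed as a tuple (H is required to be permutation invariant in X). *)
Variable H : Rp -> Rp -> (n.+1).-tuple Rp -> R.

(* realized data: features xs and scores vs (vs i = V(Z_i)) *)
Variables (xs : 'I_n.+1 -> Rp) (vs : 'I_n.+1 -> R).

Definition Xset : (n.+1).-tuple Rp := [tuple xs i | i < n.+1].

Definition Hm (i j : 'I_n.+1) : R := H (xs i) (xs j) Xset.

Definition pH (i j : 'I_n.+1) : R := Hm i j / \sum_(k < n.+1) Hm i k.

Definition vbar (a : R) : \bar R :=
  Qd a (pH ord_max) (fun j => if (j < n)%N then (vs j)%:E else +oo%E).

Definition vstar1 (a : R) (i : 'I_n.+1) : \bar R :=
  Qd a (pH i) (fun j => if (j < n)%N then (vs j)%:E else vbar a).

Definition vstar2 (a : R) (i : 'I_n.+1) : \bar R :=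
  Qd a (pH i) (fun j => if (j < n)%N then (vs j)%:E else 0%E).

Definition G2 (alpha a : R) : bool :=
  (alpha <= (\sum_(i < n.+1 | (i < n)%N) ((vs i)%:E <= vstar1 a i)%E%:R)
             / n.+1%:R)
  && (alpha <= (\sum_(i < n.+1 | (i < n)%N) ((vs i)%:E <= vstar2 a i)%E%:R)
                / n.+1%:R + 1 / n.+1%:R).

Variables (M : nat) (grid : 'I_M -> R) (alpha : R).

Definition admissible (m : 'I_M) : bool :=
  (vbar (grid m) == +oo%E) || G2 alpha (grid m).

(* index of the smallest admissible grid value (grid is increasing) *)
Definition sel : option 'I_M :=
  [pick m | admissible m & [forall k, admissible k ==> (m <= k)%N]].

(* Q(\tilde alpha; \hat F); the None branch is never used under the
   standing assumption that an admissible grid value exists. *)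
Definition threshold : \bar R :=
  match sel with Some m => vbar (grid m) | None => +oo%E end.

Definition Chat (V : Rp * R -> R) : set R :=
  [set y | ((V (xs ord_max, y))%:E <= threshold)%E].

End Localized.

Definition mutually_independent d (T : measurableType d) (R : realType)
  (P : probability T R) d' (U : measurableType d') (k : nat)
  (Z : 'I_k -> T -> U) : Prop :=
  forall A : 'I_k -> set U, (forall i, measurable (A i)) ->
    P (\bigcap_(i in [set: 'I_k]) (Z i @^-1` A i)) =
    (\prod_(i < k) P (Z i @^-1` A i))%E.

(* Main.v *)
Require Import Defs.
From HB Require Import structures.
From mathcomp Require Import all_boot all_order all_algebra all_fingroup.
From mathcomp Require Import all_classical all_reals all_analysis.
From mathcomp Require Import measurable_realfun.
Import Order.TTheory GRing.Theory Num.Theory.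
Local Open Scope ring_scope.
Local Open Scope classical_set_scope.
Set Implicit Arguments. Unset Strict Implicit.
Section QdLemmas.
Context (R : realType) (n : nat).
Implicit Types (w : 'I_n.+1 -> R) (v u : 'I_n.+1 -> \bar R).
Local Open Scope ereal_scope.

Definition Sw w v (t : \bar R) : R := (\sum_(j < n.+1 | (v j <= t)%E) w j)%R.
Definition Qf (a : R) w v : \bar R :=
  if (a <= 0)%R then -oo else \big[mine/+oo]_(j | (a <= Sw w v (v j))%R) v j.

Lemma Sw_ge0 w v t : (forall j, 0 <= w j)%R -> (0 <= Sw w v t)%R.
Proof. by move=> w0; rewrite /Sw sumr_ge0. Qed.

Lemma QdE a w v : (forall j, 0 <= w j)%R -> Qd a w v = Qf a w v.
Proof.
move=> w0; rewrite /Qd /Qf; case: ifP => a0.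
  rewrite (_ : [set t | _] = setT) ?ereal_infT //; apply/seteqP; split => // t _.
  rewrite /=; apply: (le_trans a0); rewrite sumr_ge0 //.
apply/le_anti/andP; split.
  have [[j Pj]|none] := pselect (exists j, (a <= Sw w v (v j))%R).
    have [i0 Pi0 ->] := @eq_bigmin _ _ _ (+oo : \bar R) j
      (fun j => (a <= Sw w v (v j))%R) v Pj (fun i _ => leey (v i)).
    by apply: ereal_inf_lbound; exact: Pi0.
  rewrite big_pred0 ?leey // => j; apply/negP => Pj; apply: none; by exists j.
apply/ereal_infP => t /= Ht.
have a0' : (0 < a)%R by rewrite ltNge a0.
have [[k Jk]|none] := pselect (exists k, v k <= t); last first.
  exfalso; move: Ht; rewrite big_pred0 ?ltNge ?a0 //.
  by move=> k; apply/negP => Jk; apply: none; exists k.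
have [j Jj Ej] := @eq_bigmax _ _ _ (-oo : \bar R) k (fun k => v k <= t) v Jk
  (fun i _ => leNye (v i)).
have Pj : (a <= Sw w v (v j))%R.
  apply: (le_trans Ht); rewrite /Sw [X in (X <= _)%R]big_mkcond [X in (_ <= X)%R]big_mkcond.
  apply: ler_sum => i _; case: (boolP (v i <= t)) => vi; last by case: ifP.
  by rewrite ifT // -Ej; apply: le_bigmax_cond.
apply: (le_trans (@bigmin_le_cond _ _ _ (+oo : \bar R) j (fun j => (a <= Sw w v (v j))%R) v Pj)).
exact: Jj.
Qed.

Lemma Qd_mono_a a b w v : (a <= b)%R -> Qd a w v <= Qd b w v.
Proof. by move=> ab; apply: le_ereal_inf => t /=; apply: le_trans. Qed.

Lemma Qd_mono_v a w u v : (forall j, 0 <= w j)%R -> (forall j, u j <= v j) ->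
  Qd a w u <= Qd a w v.
Proof.
move=> w0 uv; apply: le_ereal_inf => t /= Ht; apply: (le_trans Ht).
rewrite big_mkcond [X in (_ <= X)%R]big_mkcond; apply: ler_sum => i _.
case: ifP => vi; first by rewrite ifT // (le_trans (uv i)).
by case: ifP.
Qed.

Lemma Qd_perm a w v (s : 'S_n.+1) : Qd a (w \o s) (v \o s) = Qd a w v.
Proof.
have E t : (\sum_(j < n.+1 | ((v \o s) j <= t)%E) (w \o s) j = \sum_(j < n.+1 | (v j <= t)%E) w j)%R.
  by rewrite [RHS](reindex_inj (@perm_inj _ s)).
by rewrite /Qd; under eq_set => t do rewrite E.
Qed.

Lemma Qd_hat a w v vh (m0 : 'I_n.+1) : (forall j, 0 <= w j)%R ->
  (forall j, j != m0 -> vh j = v j) -> vh m0 = +oo ->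
  Qd a w vh < v m0 -> Qd a w v <= Qd a w vh.
Proof.
move=> w0 ev em; rewrite !QdE // /Qf; case: ifP => // a0 Hlt.
have [[j Pj]|none] := pselect (exists j, (a <= Sw w vh (vh j))%R); last first.
  by move: Hlt; rewrite big_pred0 ?ltNge ?leey // => j; apply/negP => Pj; apply: none; exists j.
have [i0 Pi0 Ei0] := @eq_bigmin _ _ _ (+oo : \bar R) j
  (fun j => (a <= Sw w vh (vh j))%R) vh Pj (fun i _ => leey (vh i)).
rewrite Ei0 in Hlt *.
have i0m : i0 != m0 by apply/eqP => e; move: Hlt; rewrite e em ltNge leey.
rewrite ev // in Hlt *.
apply: (@bigmin_le_cond _ _ _ (+oo : \bar R) i0 (fun j => (a <= Sw w v (v j))%R) v).
move: Pi0; rewrite unfold_in /= ev //.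
have -> // : Sw w vh (v i0) = Sw w v (v i0).
rewrite /Sw; apply: eq_bigl => k; case: (eqVneq k m0) => [->|km]; last by rewrite ev.
rewrite em; apply/idP/idP => H; last by move: H; rewrite leNgt Hlt.
by move: Hlt; rewrite leye_eq in H; rewrite (eqP H) ltNge leey.
Qed.

End QdLemmas.
Lemma ord_lt_max (n : nat) (j : 'I_n.+1) : (j < n)%N = (j != ord_max).
Proof.
apply/idP/idP => [jn|jm]; first by apply/eqP => e; move: jn; rewrite e /= ltnn.
by rewrite ltn_neqAle -ltnS ltn_ord andbT; move: jm; apply: contra => /eqP e; apply/eqP/val_inj.
Qed.

Lemma pick_minP M (P : pred 'I_M) m0 : P m0 ->
  {m | [pick m | P m & [forall k, P k ==> (m <= k)%N]] = Some m &
       P m /\ forall k, P k -> (m <= k)%N}.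
Proof.
move=> Pm0; case: pickP => [m /andP[Pm /forallP mk]|none].
  by exists m => //; split => // k Pk; exact: (implyP (mk k)).
exfalso; case: (arg_minnP val Pm0) => i Pi imin.
have := none i; rewrite Pi /=; move/negbT/forallPn => [k]; rewrite negb_imply.
by case/andP => Pk; rewrite imin.
Qed.
Arguments pick_minP {M P m0}.

Section Det.
Context (R : realType) (p n : nat)
  (H : p.-tuple R -> p.-tuple R -> (n.+1).-tuple (p.-tuple R) -> R)
  (M : nat) (grid : 'I_M -> R) (alpha : R).
Hypothesis H01 : forall x1 x2 X, 0 <= H x1 x2 X <= 1.
Hypothesis Hdiag : forall x X, H x x X = 1.

Definition qq xs vs a i := Qd a (pH H xs i) (fun j => (vs j)%:E).
Definition cnt xs (vs : 'I_n.+1 -> R) a : R :=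
  \sum_(i < n.+1) (((vs i)%:E <= qq xs vs a i)%E)%:R.
Definition validc (c : R -> R) m := alpha * n.+1%:R <= c (grid m).
Definition selO c := [pick m | validc c m & [forall k, validc c k ==> (m <= k)%N]].
Definition Ev xs vs i := if selO (cnt xs vs) is Some m
  then ~~ ((vs i)%:E <= qq xs vs (grid m) i)%E else false.

Lemma Hm_ge0 xs i j : 0 <= Hm H xs i j.
Proof. by case/andP: (H01 (xs i) (xs j) (Xset xs)). Qed.

Lemma den_gt0 xs i : 0 < \sum_(k < n.+1) Hm H xs i k.
Proof.
rewrite (bigD1 i) //= {1}/Hm Hdiag; apply: (lt_le_trans ltr01).
by rewrite lerDl sumr_ge0 // => k _; exact: Hm_ge0.
Qed.

Lemma pH_ge0 xs i j : 0 <= pH H xs i j.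
Proof. by rewrite /pH divr_ge0 ?Hm_ge0 // ltW // den_gt0. Qed.

Lemma cnt_le xs vs a : cnt xs vs a <= n.+1%:R.
Proof.
have -> : (n.+1%:R : R) = \sum_(i < n.+1) (1 : R) by rewrite sumr_const card_ord.
by rewrite /cnt ler_sum // => i _; case: (_ <= _)%E.
Qed.

Lemma Ev_sum xs vs : alpha < 1 ->
  \sum_(i < n.+1) (Ev xs vs i)%:R <= (1 - alpha) * n.+1%:R.
Proof.
move=> a1; rewrite /Ev /selO; case: pickP => [m /andP[vm _]|_]; last first.
  by rewrite big1 // mulr_ge0 // subr_ge0 ltW.
rewrite (eq_bigr (fun i => 1 - (((vs i)%:E <= qq xs vs (grid m) i)%E)%:R)); last first.
  by move=> i _; case: (_ <= _)%E; rewrite ?subrr ?subr0.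
rewrite sumrB sumr_const card_ord -/(cnt xs vs (grid m)) mulrBl mul1r.
exact: lerB (lexx _) vm.
Qed.

Lemma natr_le_imply (b1 b2 : bool) : (b1 -> b2) -> (b1%:R : R) <= b2%:R.
Proof. by case: b1; case: b2 => // /(_ isT). Qed.

Lemma uncov xs vs : (forall i j : 'I_M, (i < j)%N -> grid i < grid j) ->
  (exists m, admissible H xs vs grid alpha m) ->
  ~~ ((vs ord_max)%:E <= threshold H xs vs grid alpha)%E -> Ev xs vs ord_max.
Proof.
move=> ginc [m0 adm0] unc.
have [m selm [admm minm]] := pick_minP adm0.
move: unc; rewrite /threshold /sel selm => unc.
set a := grid m in unc admm *.
set vb := vbar H xs vs a in unc admm *.
have vblt : (vb < (vs ord_max)%:E)%E by rewrite ltNge.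
have vbF : (vb == +oo%E) = false.
  by apply/negbTE/eqP => e; move: vblt; rewrite e ltNge leey.
move: admm; rewrite /admissible -/a -/vb vbF /= /G2 => /andP[G1 _].
have valm : validc (cnt xs vs) m.
  rewrite /validc -/a; move: G1; rewrite ler_pdivlMr ?ltr0Sn // => G1.
  apply: (le_trans G1); apply: (@le_trans _ _ (\sum_(i < n.+1 | (i < n)%N)
     (((vs i)%:E <= qq xs vs a i)%E)%:R)).
    apply: ler_sum => i _; apply: natr_le_imply => h; apply: (le_trans h).
    apply: Qd_mono_v => [j|j]; first exact: pH_ge0.
    case: ifP => // jn; have -> : j = ord_max by apply/eqP; move/negbT: jn; rewrite ord_lt_max negbK.
    exact: ltW.
  rewrite /cnt [X in _ <= X](bigID (fun i : 'I_n.+1 => (i < n)%N)) /= lerDl.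
  by rewrite sumr_ge0 // => i _; case: (_ <= _)%E.
have [m' sel' [valm' minm']] := pick_minP valm.
rewrite /Ev /selO sel' -ltNge; apply: (le_lt_trans _ vblt).
apply: (@le_trans _ _ (qq xs vs a ord_max)).
  apply: Qd_mono_a; have := minm' m valm; rewrite leq_eqVlt => /orP[/eqP e|lt].
    by rewrite /a (_ : m' = m) //; exact: val_inj.
  exact/ltW/ginc.
apply: (@Qd_hat _ _ _ _ _ _ ord_max) => //.
- by move=> j; exact: pH_ge0.
- by move=> j jm; rewrite ord_lt_max jm.
- by rewrite /= ltnn.
Qed.

Section Perm.
Hypothesis Hperm : forall (s : 'S_n.+1) x1 x2 X,
  H x1 x2 [tuple tnth X (s i) | i < n.+1] = H x1 x2 X.
Variable s : 'S_n.+1.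

Lemma Xset_perm (xs : 'I_n.+1 -> p.-tuple R) : Xset (xs \o s) = [tuple tnth (Xset xs) (s i) | i < n.+1].
Proof. by apply: eq_from_tnth => i; rewrite !tnth_mktuple. Qed.

Lemma Hm_perm xs i k : Hm H (xs \o s) i k = Hm H xs (s i) (s k).
Proof. by rewrite /Hm Xset_perm Hperm. Qed.

Lemma pH_perm xs i k : pH H (xs \o s) i k = pH H xs (s i) (s k).
Proof.
rewrite /pH Hm_perm; congr (_ / _); under eq_bigr do rewrite Hm_perm.
by rewrite [RHS](reindex_inj (@perm_inj _ s)).
Qed.

Lemma qq_perm xs vs a i : qq (xs \o s) (vs \o s) a i = qq xs vs a (s i).
Proof.
rewrite /qq; have -> : pH H (xs \o s) i = (pH H xs (s i)) \o s.
  by apply/funext => k; rewrite pH_perm.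
by rewrite -(@Qd_perm R n a (pH H xs (s i)) (fun j => (vs j)%:E) s).
Qed.

Lemma cnt_perm xs vs : cnt (xs \o s) (vs \o s) = cnt xs vs.
Proof.
apply/funext => a; rewrite /cnt; under eq_bigr do rewrite qq_perm.
by rewrite [RHS](reindex_inj (@perm_inj _ s)).
Qed.

Lemma Ev_perm xs vs i : Ev (xs \o s) (vs \o s) i = Ev xs vs (s i).
Proof. by rewrite /Ev cnt_perm; case: selO => // m; rewrite qq_perm. Qed.
End Perm.

End Det.
Section Meas.
Context (dY : measure_display) (Y : measurableType dY) (R : realType).
Local Notation mfun f := (measurable_fun [set: Y] f).

Lemma m_EFin (f : Y -> R) : mfun f -> mfun (fun y => (f y)%:E).
Proof. by move=> mf; exact: (proj2 (measurable_EFinP _ _) mf). Qed.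

Lemma mb_natr (b : Y -> bool) : mfun b -> mfun (fun y => (b y)%:R : R).
Proof.
move=> mb; rewrite (_ : (fun y => _) = (fun y => if b y then 1 else 0)).
  exact: measurable_fun_ifT.
by apply/funext => y; case: (b y).
Qed.

Lemma mb_forall (I : finType) (b : I -> Y -> bool) :
  (forall i, mfun (b i)) -> mfun (fun y => [forall i, b i y]).
Proof.
move=> mb; rewrite (_ : (fun y => _) = (fun y => \big[andb/true]_(i <- index_enum I) b i y)).
  elim: (index_enum I) => [|i r IH].
    rewrite (_ : (fun y => _) = (fun=> true)); first exact: measurable_cst.
    by apply/funext => y; rewrite big_nil.
  rewrite (_ : (fun y => _) = (fun y => b i y && \big[andb/true]_(j <- r) b j y)).
    exact: measurable_and.
  by apply/funext => y; rewrite big_cons.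
by apply/funext => y; rewrite big_andE.
Qed.

Lemma mb_exists (I : finType) (b : I -> Y -> bool) :
  (forall i, mfun (b i)) -> mfun (fun y => [exists i, b i y]).
Proof.
move=> mb; rewrite (_ : (fun y => _) = (fun y => \big[orb/false]_(i <- index_enum I) b i y)).
  elim: (index_enum I) => [|i r IH].
    rewrite (_ : (fun y => _) = (fun=> false)); first exact: measurable_cst.
    by apply/funext => y; rewrite big_nil.
  rewrite (_ : (fun y => _) = (fun y => b i y || \big[orb/false]_(j <- r) b j y)).
    exact: measurable_or.
  by apply/funext => y; rewrite big_cons.
by apply/funext => y; rewrite big_orE.
Qed.

Lemma mb_implyb (b c : Y -> bool) : mfun b -> mfun c -> mfun (fun y => b y ==> c y).
Proof.
move=> mb mc; rewrite (_ : (fun y => _) = (fun y => ~~ b y || c y)).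
  by apply: measurable_or => //; exact: measurable_neg.
by apply/funext => y; case: (b y).
Qed.

Lemma m_sum (I : finType) (P : pred I) (f : I -> Y -> R) :
  (forall i, P i -> mfun (f i)) -> mfun (fun y => \sum_(i | P i) f i y).
Proof.
move=> mf; under eq_fun do rewrite big_mkcond.
apply: measurable_sum => i; case: (boolP (P i)) => Pi; first exact: mf.
exact: measurable_cst.
Qed.

Lemma m_bigmin (I : Type) (r : seq I) (f : I -> Y -> \bar R) :
  (forall i, mfun (f i)) -> mfun (fun y => \big[mine/+oo%E]_(i <- r) f i y).
Proof.
move=> mf; elim: r => [|i r IH].
  rewrite (_ : (fun y => _) = (fun=> +oo%E)); first exact: measurable_cst.
  by apply/funext => y; rewrite big_nil.
rewrite (_ : (fun y => _) = (fun y => mine (f i y) (\big[mine/+oo%E]_(j <- r) f j y))).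
  exact: measurable_realfun.measurable_mine.
by apply/funext => y; rewrite big_cons.
Qed.

Context (n : nat).

Lemma measurable_Qd a (w : 'I_n.+1 -> Y -> R) (v : 'I_n.+1 -> Y -> \bar R) :
  (forall y j, 0 <= w j y) -> (forall j, mfun (v j)) ->
  (forall j, mfun (fun y => a <= Sw (w^~ y) (v^~ y) (v j y))) ->
  mfun (fun y => Qd a (w^~ y) (v^~ y)).
Proof.
move=> w0 mv mS; under eq_fun do rewrite QdE // /Qf.
apply: measurable_fun_ifT => //.
under eq_fun do rewrite bigmin_mkcond.
by apply: m_bigmin => j; apply: measurable_fun_ifT.
Qed.

Lemma measurable_Scond a (h : 'I_n.+1 -> Y -> R) (v : 'I_n.+1 -> Y -> \bar R) :
  (forall j, mfun (v j)) -> (forall k, mfun (h k)) ->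
  (forall y, 0 < \sum_k h k y) ->
  forall j, mfun (fun y => a <= Sw (fun k => h k y / \sum_k' h k' y) (v^~ y) (v j y)).
Proof.
move=> mv mh D0 j.
rewrite (_ : (fun y => _) = (fun y => a * \sum_k' h k' y <=
   \sum_(k | (v k y <= v j y)%E) h k y)).
  apply: measurable_realfun.measurable_fun_ler.
    by apply: measurable_realfun.measurable_funM => //; exact: m_sum.
  under eq_fun do rewrite big_mkcond.
  apply: measurable_sum => k; apply: measurable_fun_ifT => //.
  exact: measurable_fun_lee.
apply/funext => y; rewrite /Sw -mulr_suml ler_pdivlMr //.
Qed.

End Meas.
Lemma pick_bigmin (R : realType) M (P : pred 'I_M) (f : 'I_M -> \bar R) :
  (forall m1 m2, P m1 -> P m2 -> m1 = m2) ->
  (if [pick m | P m] is Some m then f m else +oo%E) =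
  \big[mine/+oo%E]_m (if P m then f m else +oo%E).
Proof.
move=> Pu; case: pickP => [m Pm|none]; last first.
  by rewrite big1 // => i _; rewrite none.
rewrite (bigD1 m) //= Pm big1 ?minEle ?leey // => i im.
by case: ifP => // Pi; move: im; rewrite (Pu _ _ Pi Pm) eqxx.
Qed.

Lemma pick_exists M (P : pred 'I_M) (g : 'I_M -> bool) :
  (forall m1 m2, P m1 -> P m2 -> m1 = m2) ->
  (if [pick m | P m] is Some m then g m else false) = [exists m, P m && g m].
Proof.
move=> Pu; case: pickP => [m Pm|none]; last first.
  by apply/esym/negbTE/existsPn => m; rewrite none.
apply/idP/existsP => [gm|[m' /andP[Pm' gm']]]; first by exists m; rewrite Pm.
by rewrite (Pu _ _ Pm Pm').
Qed.

Lemma minpred_uniq M (Q : pred 'I_M) m1 m2 :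
  Q m1 && [forall k, Q k ==> (m1 <= k)%N] -> Q m2 && [forall k, Q k ==> (m2 <= k)%N] ->
  m1 = m2.
Proof.
move=> /andP[Q1 /forallP F1] /andP[Q2 /forallP F2]; apply/val_inj/eqP.
by rewrite eqn_leq (implyP (F1 m2) Q2) (implyP (F2 m1) Q1).
Qed.

Section MeasSpecific.
Context (dY : measure_display) (Y : measurableType dY) (R : realType) (p n : nat)
  (H : p.-tuple R -> p.-tuple R -> (n.+1).-tuple (p.-tuple R) -> R)
  (M : nat) (grid : 'I_M -> R) (alpha : R)
  (xsf : 'I_n.+1 -> Y -> p.-tuple R) (vsf : 'I_n.+1 -> Y -> R).
Local Notation mfun f := (measurable_fun [set: Y] f).
Hypothesis H01 : forall x1 x2 X, 0 <= H x1 x2 X <= 1.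
Hypothesis Hdiag : forall x X, H x x X = 1.
Hypothesis mH : measurable_fun setT
    (fun t : (p.-tuple R * p.-tuple R * (n.+1).-tuple (p.-tuple R))%type =>
       H t.1.1 t.1.2 t.2).
Hypothesis mxs : forall i, mfun (xsf i).
Hypothesis mvs : forall i, mfun (vsf i).

Let XS y := fun i => xsf i y.
Let VS y := fun i => vsf i y.

Lemma m_Xset : mfun (fun y => Xset (XS y)).
Proof.
apply/measurable_fun_tnthP => j.
rewrite (_ : _ \o _ = xsf j) //; apply/funext => y /=; by rewrite tnth_mktuple.
Qed.

Lemma m_Hm i k : mfun (fun y => Hm H (XS y) i k).
Proof.
rewrite /Hm; apply: (measurableT_comp (f := fun t : (p.-tuple R * p.-tuple R * (n.+1).-tuple (p.-tuple R))%type =>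
       H t.1.1 t.1.2 t.2) (g := fun y => (xsf i y, xsf k y, Xset (XS y)))) => //.
apply: measurable_fun_pair; last exact: m_Xset.
exact: measurable_fun_pair.
Qed.

Lemma m_QdpH a i (v : 'I_n.+1 -> Y -> \bar R) : (forall j, mfun (v j)) ->
  mfun (fun y => Qd a (pH H (XS y) i) (v^~ y)).
Proof.
move=> mv; apply: (@measurable_Qd _ _ _ _ a (fun j y => pH H (XS y) i j) v) => //.
  by move=> y j; exact: pH_ge0.
move=> j; apply: (@measurable_Scond _ _ _ _ a (fun k y => Hm H (XS y) i k) v mv) => //.
  by move=> k; exact: m_Hm.
by move=> y; exact: den_gt0.
Qed.

Lemma m_vbar a : mfun (fun y => vbar H (XS y) (VS y) a).
Proof.
apply: (@m_QdpH a ord_max (fun j y => if (j < n)%N then (VS y j)%:E else +oo%E)) => j /=; case: (j < n)%N; last exact: measurable_cst.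
exact: (m_EFin (mvs _)).
Qed.

Lemma m_vstar1 a i : mfun (fun y => vstar1 H (XS y) (VS y) a i).
Proof.
apply: (@m_QdpH a i (fun j y => if (j < n)%N then (VS y j)%:E else vbar H (XS y) (VS y) a)) => j /=; case: (j < n)%N; last exact: m_vbar.
exact: (m_EFin (mvs _)).
Qed.

Lemma m_vstar2 a i : mfun (fun y => vstar2 H (XS y) (VS y) a i).
Proof.
apply: (@m_QdpH a i (fun j y => if (j < n)%N then (VS y j)%:E else 0%E)) => j /=; case: (j < n)%N; last exact: measurable_cst.
exact: (m_EFin (mvs _)).
Qed.

Lemma m_qq a i : mfun (fun y => qq H (XS y) (VS y) a i).
Proof. by apply: (@m_QdpH a i (fun j y => (VS y j)%:E)) => j; exact: (m_EFin (mvs _)). Qed.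

Lemma m_G2 a : mfun (fun y => G2 H (XS y) (VS y) alpha a).
Proof.
rewrite /G2; apply: measurable_and.
  apply: measurable_fun_ler => //; apply: measurable_funM => //.
  apply: m_sum => i _; apply: mb_natr; apply: measurable_fun_lee; last exact: m_vstar1.
  exact: (m_EFin (mvs _)).
apply: measurable_fun_ler => //; apply: measurable_funD => //.
apply: measurable_funM => //.
apply: m_sum => i _; apply: mb_natr; apply: measurable_fun_lee; last exact: m_vstar2.
exact: (m_EFin (mvs _)).
Qed.

Lemma m_adm m : mfun (fun y => admissible H (XS y) (VS y) grid alpha m).
Proof.
rewrite /admissible; apply: measurable_or; last exact: m_G2.
by apply: measurable_fun_eqe => //; exact: m_vbar.
Qed.

Lemma m_cover (g : Y -> \bar R) : mfun g ->
  mfun (fun y => g y <= threshold H (XS y) (VS y) grid alpha)%E.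
Proof.
move=> mg; apply: measurable_fun_lee => //.
rewrite (_ : (fun y => _) = (fun y => \big[mine/+oo%E]_m
   (if admissible H (XS y) (VS y) grid alpha m &&
      [forall k, admissible H (XS y) (VS y) grid alpha k ==> (m <= k)%N]
    then vbar H (XS y) (VS y) (grid m) else +oo%E))).
  apply: m_bigmin => m; apply: measurable_fun_ifT => //; last exact: m_vbar.
  apply: measurable_and; first exact: m_adm.
  apply: mb_forall => k; apply: mb_implyb => //; exact: m_adm.
apply/funext => y; rewrite /threshold /sel pick_bigmin //.
by move=> m1 m2; apply: minpred_uniq.
Qed.

Lemma m_cnt a : mfun (fun y => cnt H (XS y) (VS y) a).
Proof.
apply: m_sum => i _; apply: mb_natr; apply: measurable_fun_lee; last exact: m_qq.
exact: (m_EFin (mvs _)).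
Qed.

Lemma m_Ev i : mfun (fun y => Ev H grid alpha (XS y) (VS y) i).
Proof.
rewrite (_ : (fun y => _) = (fun y => [exists m,
   (validc n grid alpha (cnt H (XS y) (VS y)) m &&
      [forall k, validc n grid alpha (cnt H (XS y) (VS y)) k ==> (m <= k)%N])
    && ~~ ((VS y i)%:E <= qq H (XS y) (VS y) (grid m) i)%E])).
  apply: mb_exists => m; apply: measurable_and.
    apply: measurable_and; first by apply: measurable_fun_ler => //; exact: m_cnt.
    apply: mb_forall => k; apply: mb_implyb => //.
    by apply: measurable_fun_ler => //; exact: m_cnt.
  apply: measurable_neg; apply: measurable_fun_lee; last exact: m_qq.
  exact: (m_EFin (mvs _)).
apply/funext => y; rewrite /Ev /selO pick_exists //.
by move=> m1 m2; apply: minpred_uniq.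
Qed.

End MeasSpecific.
Section Exch.
Context (d : measure_display) (T : measurableType d) (R : realType)
  (P : probability T R) (dU : measure_display) (U : measurableType dU)
  (Pz : probability U R) (k : nat) (Z : 'I_k.+1 -> T -> U).
Hypothesis mZ : forall i, measurable_fun setT (Z i).
Hypothesis indep : mutually_independent P Z.
Hypothesis idist : forall i (A : set U), measurable A -> P (Z i @^-1` A) = Pz A.

Definition Wf (w : T) : (k.+1).-tuple U := [tuple Z i w | i < k.+1].
Definition tp (s : 'S_k.+1) (t : (k.+1).-tuple U) : (k.+1).-tuple U :=
  [tuple tnth t (s i) | i < k.+1].

Lemma mWf : measurable_fun setT Wf.
Proof.
apply/measurable_fun_tnthP => j.
by rewrite (_ : _ \o _ = Z j) //; apply/funext => w /=; rewrite tnth_mktuple.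
Qed.

Lemma mWfs s : measurable_fun setT (tp s \o Wf).
Proof.
apply/measurable_fun_tnthP => j.
by rewrite (_ : _ \o _ = Z (s j)) //; apply/funext => w /=; rewrite !tnth_mktuple.
Qed.

Definition rects : set (set ((k.+1).-tuple U)) :=
  [set B | exists A : 'I_k.+1 -> set U, (forall i, measurable (A i)) /\
     B = \bigcap_(i in [set: 'I_k.+1]) ((fun t => tnth t i) @^-1` A i)].

Lemma rects_gen : @measurable _ ((k.+1).-tuple U) = <<s rects >>.
Proof.
apply/seteqP; split.
  apply: smallest_sub; first exact: smallest_sigma_algebra.
  rewrite -bigcup_mkord_ord => B [i _ [A mA <-]].
  apply: sub_sigma_algebra.
  exists (fun j => if j == inord i then A else setT); split.
    by move=> j; case: ifP.
  apply/seteqP; split => t /=.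
    by move=> [_ At] j _ /=; case: ifP => // /eqP ->.
  by move=> /(_ (inord i) I); rewrite eqxx.
apply: smallest_sub; first exact: sigma_algebra_measurable.
move=> B [A [mA ->]]; apply: fin_bigcap_measurable; first exact: finite_finset.
move=> i _; rewrite -[X in measurable X]setTI; apply: measurable_tnth => //.
Qed.

Lemma rects_setI : setI_closed rects.
Proof.
move=> B1 B2 [A1 [mA1 ->]] [A2 [mA2 ->]].
exists (fun i => A1 i `&` A2 i); split; first by move=> i; exact: measurableI.
apply/seteqP; split => t /=.
  by move=> [h1 h2] i _; split; [exact: h1|exact: h2].
by move=> h; split => i _; have [] := h i I.
Qed.

Lemma exch (s : 'S_k.+1) B : measurable B ->
  P (Wf @^-1` B) = P ((tp s \o Wf) @^-1` B).
Proof.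
move=> mB.
pose Q := [set B | P (Wf @^-1` B) = P ((tp s \o Wf) @^-1` B)].
suff : Q B by [].
have mpre (f : T -> (k.+1).-tuple U) C : measurable_fun setT f -> measurable C ->
    measurable (f @^-1` C).
  by move=> mf mC; rewrite -[X in measurable X]setTI; exact: mf.
apply: (dynkin_induction rects_gen rects_setI) => //.
- move=> _ [A [mA ->]]; rewrite /Q /=.
  have -> : Wf @^-1` (\bigcap_(i in [set: 'I_k.+1]) ((fun t => tnth t i) @^-1` A i)) =
     \bigcap_(i in [set: 'I_k.+1]) (Z i @^-1` A i).
    have tW w0 i : tnth (Wf w0) i = Z i w0 by rewrite tnth_mktuple.
    apply/seteqP; split => w /= h i _; first by move: (h i I) => /=; rewrite tW.
    by rewrite /= tW; exact: h.
  have -> : (tp s \o Wf) @^-1` (\bigcap_(i in [set: 'I_k.+1]) ((fun t => tnth t i) @^-1` A i)) =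
     \bigcap_(i in [set: 'I_k.+1]) (Z i @^-1` A (s^-1 i)%g).
    have tW w0 i : tnth ((tp s \o Wf) w0) i = Z (s i) w0 by rewrite /= !tnth_mktuple.
    apply/seteqP; split => w /= h i _.
      by move: (h (s^-1 i)%g I) => /=; rewrite tW permKV.
    by rewrite /= tW; move: (h (s i) I) => /=; rewrite permK.
  have e1 : (\prod_(i < k.+1) P (Z i @^-1` A i) = \prod_(i < k.+1) Pz (A i))%E.
    by apply: eq_bigr => i _; rewrite idist.
  have e2 : (\prod_(i < k.+1) P (Z i @^-1` A (s^-1 i)%g) =
             \prod_(i < k.+1) Pz (A (s^-1 i)%g))%E.
    by apply: eq_bigr => i _; rewrite idist.
  have mA' : forall i, measurable ((fun i => A (s^-1 i)%g) i) by move=> i; exact: mA.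
  have i1 := indep mA.
  have i2 := indep mA'.
  rewrite i1 i2 e1 e2 [LHS](reindex_inj (@perm_inj _ (s^-1)%g)).
  by [].
- move=> S mS h.
  have m1 := mpre _ _ mWf mS.
  have m2 := mpre _ _ (mWfs s) mS.
  change (P (Wf @^-1` (~` S)) = P ((tp s \o Wf) @^-1` (~` S))).
  change (P (Wf @^-1` S) = P ((tp s \o Wf) @^-1` S)) in h.
  have cE (f : T -> (k.+1).-tuple U) : f @^-1` (~` S) = ~` (f @^-1` S).
    by apply/seteqP; split.
  rewrite !cE (probability_setC P m1) (probability_setC P m2).
  by rewrite h.
- move=> F mF tF hF.
  change (P (Wf @^-1` (\bigcup_n F n)) = P ((tp s \o Wf) @^-1` (\bigcup_n F n))).
  rewrite !preimage_bigcup.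
  have tpre (f : T -> (k.+1).-tuple U) : trivIset setT (fun n => f @^-1` F n).
    apply/trivIsetP => i j _ _ ij; rewrite -preimage_setI.
    by move/trivIsetP : tF => /(_ i j I I ij) ->; rewrite preimage_set0.
  rewrite !measure_bigcup //; last 2 first.
  + by move=> i _; exact: mpre (mWfs s) (mF i).
  + by move=> i _; exact: mpre mWf (mF i).
  by apply: eq_eseriesr => i _; exact: (hF i).
- by rewrite -rects_gen.
Qed.

End Exch.
Unset Implicit Arguments.

Lemma mset_of_bool (dY : measure_display) (Y : measurableType dY) (f : Y -> bool) :
  measurable_fun setT f -> measurable [set y | f y].
Proof.
move=> mf; have := mf measurableT [set true] I; rewrite setTI.
by rewrite (_ : f @^-1` [set true] = [set y | f y]) //; apply/seteqP; split => y /=.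
Qed.

Theorem corollary2 (R : realType) (p n : nat)
  (d : measure_display) (T : measurableType d) (P : probability T R)
  (Pz : probability (p.-tuple R * R)%type R)
  (Z : 'I_n.+1 -> T -> (p.-tuple R * R)%type)
  (V : (p.-tuple R * R)%type -> R)
  (H : p.-tuple R -> p.-tuple R -> (n.+1).-tuple (p.-tuple R) -> R)
  (alpha : R) (M : nat) (grid : 'I_M -> R) :
  (* Z_1, ..., Z_{n+1} i.i.d. from Pz *)
  (forall i, measurable_fun setT (Z i)) ->
  mutually_independent P Z ->
  (forall i (A : set (p.-tuple R * R)), measurable A ->
     P (Z i @^-1` A) = Pz A) ->
  (* fixed measurable nonnegative score function *)
  measurable_fun setT V -> (forall z, 0 <= V z) ->
  (* localizer *)
  (forall x1 x2 X, 0 <= H x1 x2 X <= 1) ->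
  (forall x X, H x x X = 1) ->
  (forall (s : 'S_n.+1) x1 x2 X,
     H x1 x2 [tuple tnth X (s i) | i < n.+1] = H x1 x2 X) ->
  measurable_fun setT
    (fun t : (p.-tuple R * p.-tuple R * (n.+1).-tuple (p.-tuple R))%type =>
       H t.1.1 t.1.2 t.2) ->
  (* level and grid *)
  0 < alpha < 1 ->
  (forall i j : 'I_M, (i < j)%N -> grid i < grid j) ->
  (forall m, 0 <= grid m <= 1) ->
  (* an admissible grid value always exists *)
  (forall w : T, exists m : 'I_M,
     admissible H (fun i => (Z i w).1) (fun i => V (Z i w)) grid alpha m) ->
  (alpha%:E <= P [set w | Chat H (fun i => (Z i w).1) (fun i => V (Z i w))
                              grid alpha V (Z ord_max w).2])%E.
Proof.
move=> mZ indep idist mV V0 H01 Hdiag Hperm mH /andP[a0 a1] ginc grid01 exadm.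
pose U := (p.-tuple R * R)%type.
pose XSt (t : (n.+1).-tuple U) := fun i => (tnth t i).1.
pose VSt (t : (n.+1).-tuple U) := fun i => V (tnth t i).
have mxs : forall i, measurable_fun setT (fun t : (n.+1).-tuple U => (tnth t i).1).
  by move=> i; apply: measurableT_comp => //; exact: measurable_tnth.
have mvs : forall i, measurable_fun setT (fun t : (n.+1).-tuple U => V (tnth t i)).
  by move=> i; apply: measurableT_comp => //; exact: measurable_tnth.
pose Bmax := [set t | Ev H grid alpha (XSt t) (VSt t) ord_max].
have mBmax : measurable Bmax.
  exact: mset_of_bool (m_Ev grid alpha H01 Hdiag mH mxs mvs ord_max).
pose Bcov := [set t : (n.+1).-tuple U |
  ((V (tnth t ord_max))%:E <= threshold H (XSt t) (VSt t) grid alpha)%E].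
have mBcov : measurable Bcov.
  apply: mset_of_bool; apply: (m_cover grid alpha H01 Hdiag mH mxs mvs).
  exact: m_EFin (mvs ord_max).
have XW w : XSt (Wf Z w) = (fun i => (Z i w).1).
  by apply/funext => i; rewrite /XSt tnth_mktuple.
have VW w : VSt (Wf Z w) = (fun i => V (Z i w)).
  by apply/funext => i; rewrite /VSt tnth_mktuple.
pose E i := [set w | Ev H grid alpha (fun i => (Z i w).1) (fun i => V (Z i w)) i].
have EmaxE : E ord_max = Wf Z @^-1` Bmax.
  by apply/seteqP; split => w; rewrite /E /Bmax /= XW VW.
have EiE i : E i = (tp (tperm i ord_max) \o Wf Z) @^-1` Bmax.
  apply/seteqP; split => w; rewrite /E /Bmax /=.
    have -> : XSt (tp (tperm i ord_max) (Wf Z w)) = (fun i => (Z i w).1) \o (tperm i ord_max).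
      by apply/funext => j; rewrite /XSt /= !tnth_mktuple.
    have -> : VSt (tp (tperm i ord_max) (Wf Z w)) = (fun i => V (Z i w)) \o (tperm i ord_max).
      by apply/funext => j; rewrite /VSt /= !tnth_mktuple.
    by rewrite (Ev_perm grid alpha Hperm) tpermR.
  have -> : XSt (tp (tperm i ord_max) (Wf Z w)) = (fun i => (Z i w).1) \o (tperm i ord_max).
    by apply/funext => j; rewrite /XSt /= !tnth_mktuple.
  have -> : VSt (tp (tperm i ord_max) (Wf Z w)) = (fun i => V (Z i w)) \o (tperm i ord_max).
    by apply/funext => j; rewrite /VSt /= !tnth_mktuple.
  by rewrite (Ev_perm grid alpha Hperm) tpermR.
have mE i : measurable (E i).
  rewrite EiE -[X in measurable X]setTI; exact: (mWfs mZ) mBmax.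
have PE i : P (E i) = P (E ord_max).
  by rewrite EiE EmaxE -(exch mZ indep idist).
have indE i w : (\1_(E i) w : R) = (Ev H grid alpha (fun i => (Z i w).1) (fun i => V (Z i w)) i)%:R.
  rewrite indicE; congr (_%:R).
  case: (boolP (w \in E i)) => h; first by move/set_mem: h => ->.
  case: (boolP (Ev H grid alpha (fun i => (Z i w).1) (fun i => V (Z i w)) i)) => // h'.
  by move/negP: h; case; exact: mem_set.
have sumle : (\sum_(i < n.+1) P (E i) <= ((1 - alpha) * n.+1%:R)%:E)%E.
  have -> : (\sum_(i < n.+1) P (E i) = \int[P]_w (\sum_(i < n.+1) (\1_(E i) w)%:E))%E.
    rewrite ge0_integral_sum //.
    - by apply: eq_bigr => i _; rewrite integral_indic // setIT.
    - by move=> i; apply: m_EFin; exact: measurable_indic.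
  apply: le_trans (_ : (\int[P]_w (cst ((1 - alpha) * n.+1%:R)%:E w) <= _)%E).
    apply: ge0_le_integral => //.
    - by move=> w _; rewrite sume_ge0 // => i _; rewrite lee_fin indicE.
    - apply: emeasurable_sum => i; apply: m_EFin; exact: measurable_indic.
    - move=> w _; rewrite sumEFin lee_fin.
      under eq_bigr do rewrite indE.
      exact: Ev_sum.
  rewrite integral_cst // [X in (_ * X)%E](_ : _ = 1%E) ?mule1 //; exact: probability_setT.
have fin (A : set T) : measurable A -> P A = (fine (P A))%:E.
  move=> mA; rewrite fineK // ge0_fin_numE ?measure_ge0 //.
  exact: le_lt_trans (probability_le1 P mA) (ltey _).
have pm : (P (E ord_max) <= (1 - alpha)%:E)%E.
  move: sumle; under eq_bigr do rewrite PE.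
  rewrite (fin _ (mE ord_max)) sumEFin sumr_const card_ord !lee_fin => h.
  by rewrite -(ler_pM2r (ltr0Sn _ n)) mulr_natr.
pose C := [set w | Chat H (fun i => (Z i w).1) (fun i => V (Z i w)) grid alpha V (Z ord_max w).2].
have CE : C = Wf Z @^-1` Bcov.
  by apply/seteqP; split => w; rewrite /C /Bcov /Chat /= XW VW tnth_mktuple; case: (Z ord_max w).
have mC : measurable C.
  rewrite CE -[X in measurable X]setTI; exact: (mWf mZ) mBcov.
have sub : ~` C `<=` E ord_max.
  move=> w /= nC; rewrite /E /=; apply: (uncov H01 Hdiag ginc (exadm w)).
  apply/negP => h; apply: nC; rewrite /C /Chat /=; move: h; by case: (Z ord_max w).
have le1 : (P (~` C) <= P (E ord_max))%E.
  by apply: le_measure => //; rewrite inE //; exact: measurableC.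
move: (le_trans le1 pm); rewrite (probability_setC P mC) (fin _ mC) -EFinB lee_fin.
by rewrite lerD2l lerN2.
Qed.
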